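(* Fix a horizon $T\in\mathbb{N}$, matrices $A_0,\dots,A_{T}\in\mathbb{R}^{n\times n}$, a symmetric positive definite noise covariance $\mathcal{W}\in\mathbb{R}^{n\times n}$, a symmetric positive definite initial covariance $\Sigma_0$, and for each $t=0,\dots,T$ sets $\mathsf{C}_t$ of real matrices with $n$ columns and $\mathsf{V}_t$ of symmetric positive definite matrices of compatible size. Let $\mathsf{R}_t=\{C_t^{\mathsf T}\mathcal{V}_t^{-1}C_t : C_t\in\mathsf{C}_t,\ \mathcal{V}_t\in\mathsf{V}_t\}$ and $h_t(M)=A_{t-1}MA_{t-1}^{\mathsf T}+\mathcal{W}$. Problem (D) (sensor design): minimize $\sum_{t=0}^T\mathrm{tr}(P_t)$ over $\{P_t,Q_t,Q_{t|t-1},R_t,C_t,\mathcal{V}_t\}_{t=0}^T$ subject to, for all $t$: $P_t=Q_t^{-1}$, $Q_t=Q_{t|t-1}+R_t$, $Q_{t|t-1}=(h_t(P_{t-1}))^{-1}$ for $t\ge1$, $Q_{0|-1}=\Sigma_0^{-1}$, $R_t=C_t^{\mathsf T}\mathcal{V}_t^{-1}C_t$, $C_t\in\mathsf{C}_t$, $\mathcal{V}_t\in\mathsf{V}_t$. Problem (R) (relaxation): minimize $\sum_{t=0}^T\mathrm{tr}(P_t)$ over $\{P_t,Q_t,Q_{t|t-1},R_t\}_{t=0}^T$ subject to, for all $t$: $Q_t=Q_{t|t-1}+R_t$, $\begin{bmatrix}P_t & I\\ I & Q_t\end{bmatrix}\succeq0$, for $t\ge1$: $\begin{bmatrix}\mathcal{W}^{-1}-Q_{t|t-1}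 & \mathcal{W}^{-1}A_{t-1}\\ A_{t-1}^{\mathsf T}\mathcal{W}^{-1} & Q_{t-1}+A_{t-1}^{\mathsf T}\mathcal{W}^{-1}A_{t-1}\end{bmatrix}\succeq0$, $R_t\in\mathsf{R}_t$, and $Q_{0|-1}=\Sigma_0^{-1}$. Then an optimal solution of Problem (R) is also an optimal solution of Problem (D), and vice versa.
   Context: Problem (D) is the sensor design problem for the linear system $X_{t+1}=A_tX_t+W_t$, $W_t\sim\mathcal N(0,\mathcal W)$ i.i.d., $X_0\sim\mathcal N(\mu_0,\Sigma_0)$, with a designed sensor $Y_t=C_tX_t+V_t$, $V_t\sim\mathcal N(0,\mathcal V_t)$; $P_t$ is the Kalman filter error covariance and $Q_t=P_t^{-1}$, $Q_{t|t-1}$ are information matrices. Problem (R) replaces $P_t=Q_t^{-1}$ by $P_t\succeq Q_t^{-1}$ and $Q_{t|t-1}=(h_t(P_{t-1}))^{-1}$ by $Q_{t|t-1}\preceq(h_t(Q_{t-1}^{-1}))^{-1}$, written as linear matrix inequalities via Schur complements. *)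

(* Defs.v *)
From HB Require Import structures.
From mathcomp Require Import all_boot all_order all_algebra.
From mathcomp Require Import reals.
Set Implicit Arguments. Unset Strict Implicit. Unset Printing Implicit Defensive.
Import Order.TTheory GRing.Theory Num.Theory.
Local Open Scope ring_scope.

Section SensorDesign.
Variable R : realType.

Definition psd k (M : 'M[R]_k) : Prop :=
  M^T = M /\ forall x : 'cV[R]_k, 0 <= (x^T *m M *m x) ord0 ord0.

Definition pd k (M : 'M[R]_k) : Prop :=
  M^T = M /\ forall x : 'cV[R]_k, x != 0 -> 0 < (x^T *m M *m x) ord0 ord0.

Variables (n T : nat) (A : nat -> 'M[R]_n) (W Sigma0 : 'M[R]_n)
  (m : nat -> nat)
  (Cset : forall t, 'M[R]_(m t, n) -> Prop)
  (Vset : forall t, 'M[R]_(m t) -> Prop).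

Definition hmap (t : nat) (M : 'M[R]_n) : 'M[R]_n :=
  A t.-1 *m M *m (A t.-1)^T + W.

Definition cost (P : nat -> 'M[R]_n) : R := \sum_(t < T.+1) \tr (P t).

Definition feasD (P Q Qp Rm : nat -> 'M[R]_n)
  (C : forall t, 'M[R]_(m t, n)) (V : forall t, 'M[R]_(m t)) : Prop :=
  forall t, (t <= T)%N ->
    [/\ (Q t \in unitmx /\ P t = invmx (Q t)),
        Q t = (Qp t + Rm t)%R,
        (if t is 0 then Qp 0 = invmx Sigma0
         else (hmap t (P t.-1) \in unitmx /\ Qp t = invmx (hmap t (P t.-1)))),
        Rm t = (C t)^T *m invmx (V t) *m C t
      & (Cset (C t) /\ Vset (V t))].

Definition optD P Q Qp Rm C V : Prop :=
  feasD P Q Qp Rm C V /\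
  forall P' Q' Qp' Rm' C' V', feasD P' Q' Qp' Rm' C' V' -> cost P <= cost P'.

Definition inRset (t : nat) (Rt : 'M[R]_n) : Prop :=
  exists (Ct : 'M[R]_(m t, n)) (Vt : 'M[R]_(m t)),
    [/\ Cset Ct, Vset Vt & Rt = Ct^T *m invmx Vt *m Ct].

Definition feasR (P Q Qp Rm : nat -> 'M[R]_n) : Prop :=
  forall t, (t <= T)%N ->
    [/\ Q t = (Qp t + Rm t)%R,
        psd (block_mx (P t) 1%:M 1%:M (Q t)),
        (if t is 0 then Qp 0 = invmx Sigma0
         else psd (block_mx (invmx W - Qp t) (invmx W *m A t.-1)
                            ((A t.-1)^T *m invmx W)
                            (Q t.-1 + (A t.-1)^T *m invmx W *m A t.-1)))
      & inRset t (Rm t)].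

Definition optR P Q Qp Rm : Prop :=
  feasR P Q Qp Rm /\
  forall P' Q' Qp' Rm', feasR P' Q' Qp' Rm' -> cost P <= cost P'.

End SensorDesign.

(* Main.v *)
Require Import Defs.
From HB Require Import structures.
From mathcomp Require Import all_boot all_order all_algebra.
From mathcomp Require Import reals.
From mathcomp Require Import lra.
From Stdlib Require Import Logic.IndefiniteDescription.
Set Implicit Arguments. Unset Strict Implicit. Unset Printing Implicit Defensive.
Import Order.TTheory GRing.Theory Num.Theory.
Local Open Scope ring_scope.

Definition dot (R : realType) k (u v : 'cV[R]_k) : R := (u^T *m v) ord0 ord0.

Lemma dotC (R : realType) k (u v : 'cV[R]_k) : dot u v = dot v u.
Proof. by rewrite /dot -{1}(trmxK v) -trmx_mul mxE. Qed.

Lemma dotDl (R : realType) k (u v w : 'cV[R]_k) : dot (u + v) w = dot u w + dot v w.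
Proof. by rewrite /dot linearD /= mulmxDl mxE. Qed.

Lemma dotDr (R : realType) k (u v w : 'cV[R]_k) : dot w (u + v) = dot w u + dot w v.
Proof. by rewrite /dot mulmxDr mxE. Qed.

Lemma dotNl (R : realType) k (u w : 'cV[R]_k) : dot (- u) w = - dot u w.
Proof. by rewrite /dot linearN /= mulNmx mxE. Qed.

Lemma dotNr (R : realType) k (u w : 'cV[R]_k) : dot w (- u) = - dot w u.
Proof. by rewrite /dot mulmxN mxE. Qed.

Lemma dotBl (R : realType) k (u v w : 'cV[R]_k) : dot (u - v) w = dot u w - dot v w.
Proof. by rewrite dotDl dotNl. Qed.

Lemma dotBr (R : realType) k (u v w : 'cV[R]_k) : dot w (u - v) = dot w u - dot w v.
Proof. by rewrite dotDr dotNr. Qed.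

Lemma dot0l (R : realType) k (w : 'cV[R]_k) : dot 0 w = 0.
Proof. by rewrite /dot linear0 mul0mx mxE. Qed.

Lemma dot_mull (R : realType) k l (M : 'M[R]_(k, l)) u v :
  dot u (M *m v) = dot (M^T *m u) v.
Proof. by rewrite /dot trmx_mul trmxK mulmxA. Qed.

Lemma dot_mulr (R : realType) k l (M : 'M[R]_(k, l)) u v :
  dot (M *m v) u = dot v (M^T *m u).
Proof. by rewrite dotC dot_mull dotC. Qed.

Lemma qfE (R : realType) k (M : 'M[R]_k) x :
  (x^T *m M *m x) ord0 ord0 = dot x (M *m x).
Proof. by rewrite /dot mulmxA. Qed.

Lemma psdE (R : realType) k (M : 'M[R]_k) :
  psd M <-> M^T = M /\ forall x, 0 <= dot x (M *m x).
Proof.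
by split=> -[h1 h2]; split=> // x; have := h2 x; rewrite qfE.
Qed.

Lemma pdE (R : realType) k (M : 'M[R]_k) :
  pd M <-> M^T = M /\ forall x, x != 0 -> 0 < dot x (M *m x).
Proof.
by split=> -[h1 h2]; split=> // x /h2; rewrite qfE.
Qed.

Lemma dot_delta (R : realType) k (M : 'M[R]_k) (i j : 'I_k) :
  dot (delta_mx i 0) (M *m delta_mx j 0) = M i j.
Proof.
by rewrite /dot -colE trmx_delta -rowE !mxE.
Qed.

Lemma dotxx (R : realType) k (x : 'cV[R]_k) : x != 0 -> 0 < dot x x.
Proof.
move=> hx; rewrite /dot mxE.
have h0 : forall i : 'I_k, true -> 0 <= x^T ord0 i * x i ord0.
  by move=> i _; rewrite mxE -expr2 sqr_ge0.
rewrite lt0r sumr_ge0 // andbT.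
apply: contra hx; rewrite psumr_eq0 // => /allP h.
apply/eqP/matrixP => i j; rewrite (ord1 j) mxE.
have := h i (mem_index_enum _); rewrite mxE /= -expr2 sqrf_eq0 => /eqP ->. done.
Qed.

Lemma dotZl (R : realType) k (s : R) (u v : 'cV[R]_k) : dot (s *: u) v = s * dot u v.
Proof. by rewrite /dot linearZ /= -scalemxAl mxE. Qed.

Lemma dotZr (R : realType) k (s : R) (u v : 'cV[R]_k) : dot v (s *: u) = s * dot v u.
Proof. by rewrite /dot -scalemxAr mxE. Qed.

Lemma blockq (R : realType) k (a b c d : 'M[R]_k) (x y : 'cV[R]_k) :
  dot (col_mx x y) (block_mx a b c d *m col_mx x y) =
  dot x (a *m x) + dot x (b *m y) + dot y (c *m x) + dot y (d *m y).
Proof.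
rewrite /dot tr_col_mx mulmxA mul_row_block mul_row_col !mulmxDl -!mulmxA !mxE.
lra.
Qed.

Lemma dot0r (R : realType) k (w : 'cV[R]_k) : dot w 0 = 0.
Proof. by rewrite dotC dot0l. Qed.

Lemma sym_inv (R : realType) k (M : 'M[R]_k) : M^T = M -> (invmx M)^T = invmx M.
Proof. by move=> h; rewrite trmx_inv h. Qed.

Lemma pd_psd (R : realType) k (M : 'M[R]_k) : pd M -> psd M.
Proof.
move=> /pdE [h1 h2]; apply/psdE; split=> // x.
have [->|hx] := eqVneq x 0; first by rewrite dot0l.
exact/ltW/h2.
Qed.

Lemma pd_unit (R : realType) k (M : 'M[R]_k) : pd M -> M \in unitmx.
Proof.
move=> /pdE [h1 h2]; apply: contraT => hu.
have : kermx M != 0 by rewrite kermx_eq0 row_free_unit.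
case/rowV0Pn => v /sub_kermxP hv hv0.
have hx : v^T != 0 by apply: contra hv0 => /eqP h; rewrite -(trmxK v) h linear0.
have := h2 _ hx.
have -> : M *m v^T = 0 by rewrite -h1 -trmx_mul hv linear0.
by rewrite /dot mulmx0 mxE ltxx.
Qed.

Lemma pd_inv (R : realType) k (M : 'M[R]_k) : pd M -> pd (invmx M).
Proof.
move=> hM; have hu := pd_unit hM; move: hM => /pdE [h1 h2].
apply/pdE; split; first exact: sym_inv.
move=> x hx; set y := invmx M *m x.
have hxy : x = M *m y by rewrite /y mulmxA mulmxV // mul1mx.
have hy : y != 0 by apply: contra hx => /eqP hy; rewrite hxy hy mulmx0.
by rewrite {1}hxy dotC; apply: h2.
Qed.

Lemma var_le (R : realType) k (M : 'M[R]_k) x y : pd M ->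
  2 * dot y x - dot y (M *m y) <= dot x (invmx M *m x).
Proof.
move=> hM; have hu := pd_unit hM; have hMs := pd_psd hM.
move: hMs => /psdE [h1 h2].
have := h2 (y - invmx M *m x).
rewrite mulmxBr mulmxA mulmxV // mul1mx !dotBl !dotBr.
rewrite [dot (invmx M *m x) (M *m y)]dot_mulr trmx_inv h1 mulmxA mulVmx // mul1mx.
rewrite [dot (invmx M *m x) x]dotC [dot y x]dotC [dot x y]dotC.
set a := dot y (M *m y); set b := dot y x; set c := dot x (invmx M *m x).
move=> h. rewrite -subr_ge0. lra.
Qed.

Lemma var_eq (R : realType) k (M : 'M[R]_k) x : pd M ->
  dot x (invmx M *m x) = 2 * dot (invmx M *m x) x - dot (invmx M *m x) (M *m (invmx M *m x)).
Proof.
move=> hM; have hu := pd_unit hM.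
rewrite mulmxA mulmxV // mul1mx [dot (invmx M *m x) x]dotC. lra.
Qed.

Lemma psdD (R : realType) k (M N : 'M[R]_k) : psd M -> psd N -> psd (M + N).
Proof.
move=> /psdE [h1 h2] /psdE [h3 h4]; apply/psdE; split; first by rewrite linearD /= h1 h3.
by move=> x; rewrite mulmxDl dotDr addr_ge0.
Qed.

Lemma pdD (R : realType) k (M N : 'M[R]_k) : psd M -> pd N -> pd (M + N).
Proof.
move=> /psdE [h1 h2] /pdE [h3 h4]; apply/pdE; split; first by rewrite linearD /= h1 h3.
by move=> x hx; rewrite mulmxDl dotDr; have := h2 x; have := h4 x hx; lra.
Qed.

Lemma psd_congr (R : realType) k l (M : 'M[R]_k) (C : 'M[R]_(k, l)) :
  psd M -> psd (C^T *m M *m C).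
Proof.
move=> /psdE [h1 h2]; apply/psdE; split.
  by rewrite !trmx_mul trmxK h1 mulmxA.
by move=> x; rewrite -!mulmxA dot_mull trmxK; apply: h2.

Qed.

Lemma qf_sub (R : realType) k (M N : 'M[R]_k) x :
  dot x ((M - N) *m x) = dot x (M *m x) - dot x (N *m x).
Proof. by rewrite mulmxBl dotBr. Qed.

Lemma psd_tr (R : realType) k (M : 'M[R]_k) : psd M -> 0 <= \tr M.
Proof.
move=> /psdE [_ h]; rewrite /mxtrace sumr_ge0 // => i _.
by rewrite -dot_delta h.
Qed.

Lemma psd_diag0 (R : realType) k (M : 'M[R]_k) : psd M ->
  (forall i, M i i = 0) -> M = 0.
Proof.
move=> /psdE [h1 h2] hd; apply/matrixP => i j; rewrite mxE.
have hs : M j i = M i j by rewrite -{1}h1 mxE.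
have e1 := h2 (delta_mx i 0 + delta_mx j 0).
have e2 := h2 (delta_mx i 0 - delta_mx j 0).
move: e1 e2; rewrite !mulmxDr !mulmxN !dotDl !dotNl !dotDr !dotNr !dot_delta !hd hs.
move=> e1 e2; lra.
Qed.

Lemma psd_tr0 (R : realType) k (M : 'M[R]_k) : psd M -> \tr M = 0 -> M = 0.
Proof.
move=> hM ht; apply: psd_diag0 => // i.
move: hM => /psdE [_ h].
have h0 : forall j : 'I_k, true -> 0 <= M j j by move=> j _; rewrite -dot_delta h.
move: ht => /eqP; rewrite /mxtrace psumr_eq0 // => /allP /(_ i (mem_index_enum _)) /=.
by move/eqP.
Qed.

Lemma psd_antisym (R : realType) k (M : 'M[R]_k) : psd M -> psd (- M) -> M = 0.
Proof.
move=> hM hN; apply: psd_diag0 => // i.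
move: hM hN => /psdE [_ h] /psdE [_ h'].
have := h (delta_mx i 0); have := h' (delta_mx i 0).
rewrite mulNmx dotNr !dot_delta => a b; lra.
Qed.

Lemma psd_trans (R : realType) k (M N K : 'M[R]_k) :
  psd (M - N) -> psd (N - K) -> psd (M - K).
Proof.
move=> h1 h2; have := psdD h1 h2.
by rewrite addrA subrK.
Qed.

Lemma pd_inv_le (R : realType) k (M N : 'M[R]_k) : pd N -> psd (M - N) ->
  psd (invmx N - invmx M).
Proof.
move=> hN hMN.
have hM : pd M by have := pdD hMN hN; rewrite subrK.
have /pdE [hMs _] := pd_inv hM; have /pdE [hNs _] := pd_inv hN.
apply/psdE; split; first by rewrite linearB /= hMs hNs.
move=> x; rewrite qf_sub subr_ge0.
rewrite (var_eq x hM).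
set y := invmx M *m x.
have := var_le x y hN.
move: hMN => /psdE [_ /(_ y)]; rewrite qf_sub.
rewrite mulmxA mulmxV ?pd_unit // mul1mx => a b.
lra.
Qed.

Lemma block1 (R : realType) k (P Q : 'M[R]_k) :
  psd (block_mx P 1%:M 1%:M Q) -> pd Q /\ psd (P - invmx Q).
Proof.
move=> /psdE [hs hq].
move: hs; rewrite tr_block_mx trmx1 => /eq_block_mx [hP _ _ hQ].
have hq' : forall x y, 0 <= dot x (P *m x) + dot x y + dot y x + dot y (Q *m y).
  by move=> x y; have := hq (col_mx x y); rewrite blockq !mul1mx.
have hPp : forall x, 0 <= dot x (P *m x).
  by move=> x; have := hq' x 0; rewrite mulmx0 ?dot0l ?dot0r; lra.
have hQp : forall x, 0 <= dot x (Q *m x).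
  by move=> x; have := hq' 0 x; rewrite mulmx0 ?dot0l ?dot0r; lra.
have hQ' : pd Q.
  apply/pdE; split=> // y hy.
  have hb := dotxx hy; have ha := hPp y; have hc := hQp y.
  set a := dot y (P *m y) in ha; set b := dot y y in hb; set c := dot y (Q *m y) in hc *.
  set s := b / (a + 1).
  have hs0 : 0 < s by rewrite /s divr_gt0 //; lra.
  have hsa : s * (a + 1) = b by rewrite /s divfK //; apply: lt0r_neq0; lra.
  have := hq' (- (s *: y)) y.
  rewrite !mulmxN !dotNl !dotNr opprK -scalemxAr !dotZl !dotZr -/a -/b -/c.
  rewrite lt_neqAle hc andbT; apply: contraTneq => <-.
  nra.
split=> //.
have hu := pd_unit hQ'.
apply/psdE; split; first by rewrite linearB /= hP sym_inv.
move=> x; rewrite qf_sub.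
have := hq' x (- (invmx Q *m x)).
rewrite dotNr dotNl mulmxN dotNr dotNl opprK mulmxA mulmxV // mul1mx [dot (invmx Q *m x) x]dotC.
lra.
Qed.

Lemma block1' (R : realType) k (Q : 'M[R]_k) :
  pd Q -> psd (block_mx (invmx Q) 1%:M 1%:M Q).
Proof.
move=> hQ; have /pdE [hs _] := hQ.
apply/psdE; split; first by rewrite tr_block_mx trmx1 hs sym_inv.
move=> v; rewrite -(vsubmxK v) blockq !mul1mx.
set x := usubmx v; set y := dsubmx v.
have := var_le x (- y) hQ.
rewrite dotNl mulmxN dotNr dotNl opprK [dot y x]dotC; lra.
Qed.

Lemma Fq (R : realType) k (W Qp Qprev A : 'M[R]_k) x z : (invmx W)^T = invmx W ->
  dot (col_mx x z) (block_mx (invmx W - Qp) (invmx W *m A) (A^T *m invmx W)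
     (Qprev + A^T *m invmx W *m A) *m col_mx x z) =
  dot (x + A *m z) (invmx W *m (x + A *m z)) - dot x (Qp *m x) + dot z (Qprev *m z).
Proof.
move=> hW; rewrite blockq qf_sub mulmxDl dotDr mulmxDr !dotDl !dotDr.
have e1 : dot z (A^T *m invmx W *m x) = dot (A *m z) (invmx W *m x).
  by rewrite -mulmxA dot_mull trmxK.
have e2 : dot z (A^T *m invmx W *m A *m z) = dot (A *m z) (invmx W *m (A *m z)).
  by rewrite -!mulmxA dot_mull trmxK.
have e3 : dot x (invmx W *m A *m z) = dot x (invmx W *m (A *m z)) by rewrite mulmxA.
rewrite e1 e2 e3; lra.
Qed.

Lemma pd_h (R : realType) k (A P W : 'M[R]_k) : psd P -> pd W -> pd (A *m P *m A^T + W).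
Proof. by move=> hP hW; apply: pdD => //; have := psd_congr (A^T) hP; rewrite trmxK. Qed.

Lemma block2 (R : realType) k (W Qp Qprev A : 'M[R]_k) : pd W -> pd Qprev ->
  psd (block_mx (invmx W - Qp) (invmx W *m A) (A^T *m invmx W)
     (Qprev + A^T *m invmx W *m A)) ->
  psd (invmx (A *m invmx Qprev *m A^T + W) - Qp).
Proof.
move=> hW hQ /psdE [hs hq].
have /pdE [hWs _] := pd_inv hW.
have /pdE [hWs' _] := hW.
have /pdE [hQs _] := hQ.
have hQi := pd_inv hQ.
move: hs; rewrite tr_block_mx => /eq_block_mx [hs1 _ _ _].
have hQps : Qp^T = Qp.
  by move: hs1; rewrite linearB /= hWs => /(congr1 (fun M => invmx W - M)); rewrite !subKr.
set Hm := A *m invmx Qprev *m A^T + W.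
have hH : pd Hm by apply: pd_h => //; apply: pd_psd.
have hHu := pd_unit hH.
have /pdE [hHs _] := pd_inv hH.
apply/psdE; split; first by rewrite linearB /= hHs hQps.
move=> x; rewrite qf_sub subr_ge0.
set v := invmx Hm *m x.
have hx : x = Hm *m v by rewrite /v mulmxA mulmxV // mul1mx.
have e1 : dot x v = dot v (Hm *m v) by rewrite {1}hx dotC.
clearbody v.
set w := A^T *m v.
set z := - (invmx Qprev *m w).
have := hq (col_mx x z); rewrite Fq //.
have ex : x + A *m z = W *m v.
  rewrite /z /w mulmxN {1}hx /Hm mulmxDl -!mulmxA.
  by rewrite addrAC subrr add0r.
rewrite ex mulmxA mulVmx ?pd_unit // mul1mx.
rewrite /z mulmxN dotNl dotNr opprK [Qprev *m (invmx Qprev *m w)]mulmxA mulmxV ?pd_unit // mul1mx.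
have e2 : dot v (Hm *m v) = dot (invmx Qprev *m w) w + dot v (W *m v).
  rewrite /Hm mulmxDl dotDr; congr (_ + _).
  by rewrite dotC -!mulmxA dot_mull trmxK.
rewrite e1 e2 [dot (W *m v) v]dotC [dot (invmx Qprev *m w) w]dotC; lra.
Qed.

Lemma block2' (R : realType) k (W Qprev A : 'M[R]_k) : pd W -> pd Qprev ->
  psd (block_mx (invmx W - invmx (A *m invmx Qprev *m A^T + W)) (invmx W *m A)
     (A^T *m invmx W) (Qprev + A^T *m invmx W *m A)).
Proof.
move=> hW hQ.
have /pdE [hWs _] := pd_inv hW.
have /pdE [hQs _] := hQ.
have hQi := pd_inv hQ.
set Hm := A *m invmx Qprev *m A^T + W.
have hH : pd Hm by apply: pd_h => //; apply: pd_psd.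
have hHu := pd_unit hH.
have /pdE [hHs _] := pd_inv hH.
apply/psdE; split.
  rewrite tr_block_mx linearB /= hWs hHs !trmx_mul trmxK hWs linearD /= hQs.
  by rewrite !trmx_mul trmxK hWs mulmxA.
move=> vv; rewrite -(vsubmxK vv) Fq //.
set x := usubmx vv; set z := dsubmx vv.
set v := invmx Hm *m x.
set w := A^T *m v.
rewrite (var_eq x hH) -/v.
have h1 := var_le (x + A *m z) v hW.
have h2 := var_le (- z) w hQi.
rewrite invmxK in h2.
have e2 : dot v (Hm *m v) = dot w (invmx Qprev *m w) + dot v (W *m v).
  rewrite /Hm mulmxDl dotDr; congr (_ + _).
  by rewrite -!mulmxA dot_mull.
have e3 : dot v (A *m z) = dot w z by rewrite dot_mull.
move: h1 h2; rewrite e2 dotDr e3 mulmxN !dotNr !dotNl opprK [dot v x]dotC [dot w z]dotC.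
lra.
Qed.

Lemma psd0 (R : realType) k : psd (0 : 'M[R]_k).
Proof. by apply/psdE; split; [rewrite linear0 | move=> x; rewrite mul0mx dot0r]. Qed.

Lemma addsubK (R : realType) k (a b r : 'M[R]_k) : (a + r) - (b + r) = a - b.
Proof. by rewrite opprD addrACA subrr addr0. Qed.

Lemma inR_psd (R : realType) n (m : nat -> nat)
  (Cset : forall t, 'M[R]_(m t, n) -> Prop) (Vset : forall t, 'M[R]_(m t) -> Prop)
  (hV : forall t (Vt : 'M[R]_(m t)), Vset t Vt -> pd Vt) t Rt :
  inRset Cset Vset t Rt -> psd Rt.
Proof.
case=> C [V [hC hVs ->]]; apply: psd_congr; apply: pd_psd; apply: pd_inv.
exact: hV hVs.
Qed.

Lemma h_mono (R : realType) n (A : nat -> 'M[R]_n) W t X Y :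
  psd (X - Y) -> psd (hmap A W t X - hmap A W t Y).
Proof.
move=> h; rewrite /hmap addsubK -mulmxBl -mulmxBr.
by have := psd_congr (A t.-1)^T h; rewrite trmxK.
Qed.

Fixpoint QD (R : realType) n (A : nat -> 'M[R]_n) W Sigma0 (Rm : nat -> 'M[R]_n) t : 'M[R]_n :=
  if t is t'.+1 then invmx (hmap A W t'.+1 (invmx (QD A W Sigma0 Rm t'))) + Rm t'.+1
  else invmx Sigma0 + Rm 0%N.

Definition QpD (R : realType) n (A : nat -> 'M[R]_n) W Sigma0 (Rm : nat -> 'M[R]_n) t : 'M[R]_n :=
  if t is t'.+1 then invmx (hmap A W t'.+1 (invmx (QD A W Sigma0 Rm t')))
  else invmx Sigma0.

Definition PD (R : realType) n (A : nat -> 'M[R]_n) W Sigma0 (Rm : nat -> 'M[R]_n) t : 'M[R]_n :=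
  invmx (QD A W Sigma0 Rm t).

Lemma QDE (R : realType) n (A : nat -> 'M[R]_n) W Sigma0 Rm t :
  QD A W Sigma0 Rm t = QpD A W Sigma0 Rm t + Rm t.
Proof. by case: t. Qed.

Lemma QD_pd (R : realType) n T (A : nat -> 'M[R]_n) W Sigma0 Rm :
  pd W -> pd Sigma0 -> (forall t, (t <= T)%N -> psd (Rm t)) ->
  forall t, (t <= T)%N -> pd (QD A W Sigma0 Rm t).
Proof.
move=> hW hS hR; elim=> [|t IH] ht /=.
  by rewrite addrC; apply: pdD; [exact: hR | exact: pd_inv].
rewrite addrC; apply: pdD; first exact: hR.
apply: pd_inv; apply: pd_h => //; apply: pd_psd; apply: pd_inv; apply: IH.
exact: ltnW.
Qed.

Lemma feasD_QD (R : realType) n T (A : nat -> 'M[R]_n) W Sigma0 (m : nat -> nat)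
  (Cset : forall t, 'M[R]_(m t, n) -> Prop) (Vset : forall t, 'M[R]_(m t) -> Prop)
  (hV : forall t (Vt : 'M[R]_(m t)), Vset t Vt -> pd Vt) Rm :
  pd W -> pd Sigma0 -> (forall t, (t <= T)%N -> inRset Cset Vset t (Rm t)) ->
  exists C V, feasD T A W Sigma0 Cset Vset (PD A W Sigma0 Rm) (QD A W Sigma0 Rm)
                  (QpD A W Sigma0 Rm) Rm C V.
Proof.
move=> hW hS hR.
have ex : forall t, exists p : 'M[R]_(m t, n) * 'M[R]_(m t), (t <= T)%N ->
    [/\ Cset t p.1, Vset t p.2 & Rm t = p.1^T *m invmx p.2 *m p.1].
  move=> t; case: (leqP t T) => ht.
    by have [C [V [h1 h2 h3]]] := hR t ht; exists (C, V).
  by exists (0, 0).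
pose f t := proj1_sig (constructive_indefinite_description _ (ex t)).
have hf t : (t <= T)%N -> [/\ Cset t (f t).1, Vset t (f t).2 & Rm t = (f t).1^T *m invmx (f t).2 *m (f t).1].
  exact: (proj2_sig (constructive_indefinite_description _ (ex t))).
have hRp : forall t, (t <= T)%N -> psd (Rm t) by move=> t ht; apply: inR_psd (hR t ht).
exists (fun t => (f t).1), (fun t => (f t).2) => t ht.
have [h1 h2 h3] := hf t ht.
split=> //.
- by split=> //; apply: pd_unit; apply: QD_pd hW hS hRp t ht.
- exact: QDE.
- case: t ht {h1 h2 h3} => [|t] ht //=; split=> //.
  apply: pd_unit; rewrite /hmap /=; apply: pd_h => //; apply: pd_psd; apply: pd_inv.
  exact: (QD_pd A hW hS hRp (ltnW ht)).
Qed.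

Lemma feasR_props (R : realType) n T (A : nat -> 'M[R]_n) W Sigma0 (m : nat -> nat)
  (Cset : forall t, 'M[R]_(m t, n) -> Prop) (Vset : forall t, 'M[R]_(m t) -> Prop)
  P Q Qp Rm : feasR T A W Sigma0 Cset Vset P Q Qp Rm ->
  forall t, (t <= T)%N -> pd (Q t) /\ psd (P t - invmx (Q t)).
Proof. by move=> h t ht; have [_ hb _ _] := h t ht; apply: block1. Qed.

Lemma feasR_Qp (R : realType) n T (A : nat -> 'M[R]_n) W Sigma0 (m : nat -> nat)
  (Cset : forall t, 'M[R]_(m t, n) -> Prop) (Vset : forall t, 'M[R]_(m t) -> Prop)
  P Q Qp Rm : pd W -> feasR T A W Sigma0 Cset Vset P Q Qp Rm ->
  forall t, (t.+1 <= T)%N -> psd (invmx (hmap A W t.+1 (invmx (Q t))) - Qp t.+1).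
Proof.
move=> hW h t ht; have [_ _ hb _] := h t.+1 ht.
have [hQ _] := feasR_props h (ltnW ht).
by rewrite /hmap /=; apply: block2.
Qed.

Lemma compare (R : realType) n T (A : nat -> 'M[R]_n) W Sigma0 (m : nat -> nat)
  (Cset : forall t, 'M[R]_(m t, n) -> Prop) (Vset : forall t, 'M[R]_(m t) -> Prop)
  (hV : forall t (Vt : 'M[R]_(m t)), Vset t Vt -> pd Vt)
  P Q Qp Rm : pd W -> pd Sigma0 -> feasR T A W Sigma0 Cset Vset P Q Qp Rm ->
  forall t, (t <= T)%N -> psd (QD A W Sigma0 Rm t - Q t).
Proof.
move=> hW hS h.
have hRp : forall t, (t <= T)%N -> psd (Rm t).
  by move=> t ht; have [_ _ _ hr] := h t ht; apply: inR_psd hr.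
elim=> [|t IH] ht.
  have [e _ e0 _] := h 0%N ht; rewrite e e0 /= subrr; exact: psd0.
have ht' : (t <= T)%N by apply: ltnW.
have [hQ _] := feasR_props h ht'.
have hQD := QD_pd A hW hS hRp ht'.
have h1 := pd_inv_le hQ (IH ht').
have h2 := h_mono A W t.+1 h1.
have hH : pd (hmap A W t.+1 (invmx (QD A W Sigma0 Rm t))).
  by rewrite /hmap; apply: pd_h => //; apply: pd_psd; apply: pd_inv.
have h3 := pd_inv_le hH h2.
have h4 := feasR_Qp hW h ht.
have [e _ _ _] := h t.+1 ht.
rewrite QDE e addsubK.
exact: psd_trans h3 h4.
Qed.

Lemma P_ge_PD (R : realType) n T (A : nat -> 'M[R]_n) W Sigma0 (m : nat -> nat)
  (Cset : forall t, 'M[R]_(m t, n) -> Prop) (Vset : forall t, 'M[R]_(m t) -> Prop)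
  (hV : forall t (Vt : 'M[R]_(m t)), Vset t Vt -> pd Vt)
  P Q Qp Rm : pd W -> pd Sigma0 -> feasR T A W Sigma0 Cset Vset P Q Qp Rm ->
  forall t, (t <= T)%N -> psd (P t - PD A W Sigma0 Rm t).
Proof.
move=> hW hS h t ht.
have [hQ hP] := feasR_props h ht.
have := pd_inv_le hQ (compare hV hW hS h ht).
exact: psd_trans.
Qed.

Lemma cost_le (R : realType) n T (P P' : nat -> 'M[R]_n) :
  (forall t, (t <= T)%N -> psd (P t - P' t)) -> cost T P' <= cost T P.
Proof.
move=> h; rewrite /cost; apply: ler_sum => i _.
have := psd_tr (h i (ltn_ord i)); rewrite linearB /= subr_ge0 //.
Qed.

Lemma cost_eq (R : realType) n T (P P' : nat -> 'M[R]_n) :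
  (forall t, (t <= T)%N -> psd (P t - P' t)) -> cost T P' = cost T P ->
  forall t, (t <= T)%N -> P t = P' t.
Proof.
move=> h he t ht.
have h0 : forall i : 'I_T.+1, true -> 0 <= \tr (P i - P' i).
  by move=> i _; apply: psd_tr; apply: h; exact: (ltn_ord i).
have : \sum_(i < T.+1) \tr (P i - P' i) == 0.
  under eq_bigr do rewrite linearB /=.
  by rewrite sumrB -/(cost T P) -/(cost T P') he subrr.
rewrite psumr_eq0 // => /allP /(_ (Ordinal (ht : (t < T.+1)%N)) (mem_index_enum _)) /= /eqP.
move/(psd_tr0 (h t ht))/eqP; rewrite subr_eq0 => /eqP //.
Qed.

Lemma feasD_Qpd (R : realType) n T (A : nat -> 'M[R]_n) W Sigma0 (m : nat -> nat)
  (Cset : forall t, 'M[R]_(m t, n) -> Prop) (Vset : forall t, 'M[R]_(m t) -> Prop)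
  (hV : forall t (Vt : 'M[R]_(m t)), Vset t Vt -> pd Vt)
  P Q Qp Rm C V : pd W -> pd Sigma0 -> feasD T A W Sigma0 Cset Vset P Q Qp Rm C V ->
  forall t, (t <= T)%N -> pd (Q t).
Proof.
move=> hW hS h; elim=> [|t IH] ht.
  have [[hu hP] e e0 eR [hC hVs]] := h 0%N ht.
  rewrite e e0 eR addrC; apply: pdD; last exact: pd_inv.
  by apply: psd_congr; apply: pd_psd; apply: pd_inv; apply: hV hVs.
have [[hu hP] e [hu' e1] eR [hC hVs]] := h t.+1 ht.
have [[_ hP'] _ _ _ _] := h t (ltnW ht).
rewrite e e1 eR addrC; apply: pdD.
  by apply: psd_congr; apply: pd_psd; apply: pd_inv; apply: hV hVs.
rewrite /= hP' /hmap /=; apply: pd_inv; apply: pd_h => //.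
by apply: pd_psd; apply: pd_inv; apply: IH; apply: ltnW.
Qed.

Lemma feasDR (R : realType) n T (A : nat -> 'M[R]_n) W Sigma0 (m : nat -> nat)
  (Cset : forall t, 'M[R]_(m t, n) -> Prop) (Vset : forall t, 'M[R]_(m t) -> Prop)
  (hV : forall t (Vt : 'M[R]_(m t)), Vset t Vt -> pd Vt)
  P Q Qp Rm C V : pd W -> pd Sigma0 -> feasD T A W Sigma0 Cset Vset P Q Qp Rm C V ->
  feasR T A W Sigma0 Cset Vset P Q Qp Rm.
Proof.
move=> hW hS h t ht.
have [[hu hP] e hif eR [hC hVs]] := h t ht.
split=> //.
- by rewrite hP; apply: block1'; apply: (feasD_Qpd hV hW hS h).
- case: t ht {hu hP e eR hC hVs} hif => [|t] ht //= [_ e1].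
  have [[_ hP'] _ _ _ _] := h t (ltnW ht).
  rewrite e1 /hmap /= hP'; apply: block2' => //.
  by apply: (feasD_Qpd hV hW hS h); apply: ltnW.
- by exists (C t), (V t).
Qed.

Theorem theorem2 (R : realType) (n T : nat) (A : nat -> 'M[R]_n)
  (W Sigma0 : 'M[R]_n) (m : nat -> nat)
  (Cset : forall t, 'M[R]_(m t, n) -> Prop)
  (Vset : forall t, 'M[R]_(m t) -> Prop)
  (hW : pd W) (hS0 : pd Sigma0)
  (hV : forall t (Vt : 'M[R]_(m t)), Vset t Vt -> pd Vt) :
  (forall P Q Qp Rm : nat -> 'M[R]_n,
     optR T A W Sigma0 Cset Vset P Q Qp Rm ->
     exists (C : forall t, 'M[R]_(m t, n)) (V : forall t, 'M[R]_(m t)),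
       optD T A W Sigma0 Cset Vset P Q Qp Rm C V) /\
  (forall (P Q Qp Rm : nat -> 'M[R]_n)
     (C : forall t, 'M[R]_(m t, n)) (V : forall t, 'M[R]_(m t)),
     optD T A W Sigma0 Cset Vset P Q Qp Rm C V ->
     optR T A W Sigma0 Cset Vset P Q Qp Rm).
Proof.
split.
  move=> P Q Qp Rm [hF hopt].
  have hR : forall t, (t <= T)%N -> inRset Cset Vset t (Rm t).
    by move=> t ht; have [_ _ _ hr] := hF t ht.
  have [C [V hD]] := feasD_QD A hV hW hS0 hR.
  exists C, V.
  have hge := P_ge_PD hV hW hS0 hF.
  have c1 := cost_le hge.
  have c2 := hopt _ _ _ _ (feasDR hV hW hS0 hD).
  have ce : cost T (PD A W Sigma0 Rm) = cost T P by apply/le_anti; rewrite c1 c2.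
  have heq := cost_eq hge ce.
  have hQ : forall t, (t <= T)%N -> Q t = QD A W Sigma0 Rm t.
    move=> t ht.
    have [hQt hPt] := feasR_props hF ht.
    have h2 := pd_inv_le hQt (compare hV hW hS0 hF ht).
    rewrite -/(PD A W Sigma0 Rm t) -(heq t ht) in h2.
    have h3 : psd (- (P t - invmx (Q t))) by rewrite opprB.
    have /eqP := psd_antisym hPt h3; rewrite subr_eq0 => /eqP e.
    by rewrite -[Q t]invmxK -e (heq t ht) /PD invmxK.
  have hQp : forall t, (t <= T)%N -> Qp t = QpD A W Sigma0 Rm t.
    move=> t ht; have [e _ _ _] := hF t ht.
    by apply: (addIr (Rm t)); rewrite -e -QDE hQ.
  split; last by move=> P' Q' Qp' Rm' C' V' /(feasDR hV hW hS0); apply: hopt.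
  move=> t ht; have := hD t ht.
  case: t ht => [|t] ht.
    by rewrite (heq 0%N ht) (hQ 0%N ht) (hQp 0%N ht).
  by rewrite (heq t.+1 ht) (hQ t.+1 ht) (hQp t.+1 ht) /= (heq t (ltnW ht)).
move=> P Q Qp Rm C V [hD hopt]; split; first exact: (feasDR hV hW hS0 hD).
move=> P' Q' Qp' Rm' hF'.
have hR : forall t, (t <= T)%N -> inRset Cset Vset t (Rm' t).
  by move=> t ht; have [_ _ _ hr] := hF' t ht.
have [C' [V' hD']] := feasD_QD A hV hW hS0 hR.
apply: le_trans (hopt _ _ _ _ _ _ hD') _.
exact: cost_le (P_ge_PD hV hW hS0 hF').
Qed.
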